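(* Let $n\ge 1$ and let $Q=Q_1\otimes\cdots\otimes Q_n\in\mathcal{P}_n$ satisfy $Q^2=I$, $Q\neq\pm I$, and $Q$ anticommutes with $Z\otimes I\otimes\cdots\otimes I$. Then there exists a unique $X$-circuit $M$ on $n$ qubits such that $M\bullet Q=I\otimes\cdots\otimes I\otimes X$.
   Context: Matrices: $X=\begin{bmatrix}0&1\\1&0\end{bmatrix}$, $Z=\begin{bmatrix}1&0\\0&-1\end{bmatrix}$, $H=\frac{1}{\sqrt2}\begin{bmatrix}1&1\\1&-1\end{bmatrix}$, $CZ=\mathrm{diag}(1,1,1,-1)$. Operators on $n$ qubits act on $(\mathbb{R}^2)^{\otimes n}$, qubit $1$ being the first tensor factor; a one-qubit gate on qubit $i$, or a two-qubit gate on qubits $i,i+1$ (with qubit $i$ the first tensor factor of the gate, called its upper qubit), denotes that matrix tensored with identities on the other qubits. For matrices $C,P$, $C\bullet P=CPC^{-1}$. Real Pauli group: $\mathcal{P}_n=\{\pm(P_1\otimes\cdots\otimes P_n)\mid P_i\in\{I,X,Z,XZ\}\}$. A circuit is a finite sequence of gates $g_1,\dots,g_k$ ($g_1$ applied first); its operator is $g_k\cdots g_1$, and $M\bullet Q$ means (operator of $M$)$\bullet Q$. Derived generators (formal symbols with defining gate sequences; in a two-qubit symbol subscript $1$ is the upper, $2$ the lower qubit; '';'' separates steps): $E_1$ = empty, $E_2$ = $Z$; $D_1$ = $CZ;\,H_1,H_2;\,CZ;\,H_1,H_2;\,CZ;\,H_2$; $D_2$ = $H_1;\,CZ;\,H_1,H_2;\,CZ;\,H_2$;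 $D_3$ = $H_1,H_2;\,CZ;\,H_1,H_2;\,CZ;\,H_2$; $D_4$ = $H_1;\,CZ;\,H_1,H_2;\,CZ;\,H_2;\,CZ$. An $X$-circuit on $n$ qubits is a sequence of symbols of the form $D_{d_1}$ on qubits $1,2$, then $D_{d_2}$ on qubits $2,3$, ..., then $D_{d_{n-1}}$ on qubits $n-1,n$, then $E_e$ on qubit $n$ (for $n=1$ it is just $E_e$ on qubit 1), with $d_i\in\{1,2,3,4\}$, $e\in\{1,2\}$; two $X$-circuits are equal when their symbol sequences coincide. *)

(* Defs.v *)
From HB Require Import structures.
From mathcomp Require Import all_boot all_order all_algebra.
From mathcomp Require Import reals.
From mathcomp Require Export mxtens.

Set Implicit Arguments.
Unset Strict Implicit.
Unset Printing Implicit Defensive.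

Import Order.TTheory GRing.Theory Num.Theory.
Local Open Scope ring_scope.

Section Qubits.
Variable R : realType.

Definition Xm : 'M[R]_2 := \matrix_(i < 2, j < 2) (if i != j then 1 else 0).
Definition Zm : 'M[R]_2 :=
  \matrix_(i < 2, j < 2) (if i == j then (if i == 0 :> nat then 1 else -1) else 0).
Definition Hm : 'M[R]_2 :=
  \matrix_(i < 2, j < 2)
    ((Num.sqrt 2)^-1 * (if (i == 1 :> nat) && (j == 1 :> nat) then -1 else 1)).
Definition CZm : 'M[R]_4 :=
  \matrix_(i < 4, j < 4)
    (if i == j then (if i == 3 :> nat then -1 else 1) else 0).

(* Dimension 2^n of the n-qubit space (defined so that qdim n.+1 = 2 * qdim n
   holds by computation). *)
Fixpoint qdim (n : nat) : nat := if n is n'.+1 then (2 * qdim n')%N else 1%N.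

Lemma qdimE (n : nat) : qdim n = (2 ^ n)%N.
Proof. by elim: n => //= n ->; rewrite expnS. Qed.

Lemma dim4 (k : nat) : (4 * qdim k = qdim k.+2)%N.
Proof. by rewrite /= mulnA. Qed.

(* Operator on n qubits ((R^2)^{\otimes n}, qubit 1 = first tensor factor)
   of a one-qubit gate G on qubit i (1-based): I ⊗ .. ⊗ G ⊗ .. ⊗ I.
   (Out-of-range positions give the identity; they are never used.) *)
Fixpoint op1 (n : nat) : nat -> 'M[R]_2 -> 'M[R]_(qdim n) :=
  match n with
  | 0 => fun _ _ => 1%:M
  | n'.+1 => fun i G =>
      match i with
      | 0 => 1%:M
      | 1 => (G *t (1%:M : 'M[R]_(qdim n')) : 'M[R]_(qdim n'.+1))
      | i'.+1 => ((1%:M : 'M[R]_2) *t op1 n' i' G : 'M[R]_(qdim n'.+1))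
      end
  end.

(* Two-qubit gate G on qubits i, i+1 (qubit i = upper = first factor of G). *)
Definition top2 (n' : nat) (G : 'M[R]_4) : 'M[R]_(qdim n'.+1) :=
  match n' with
  | 0 => 1%:M
  | k.+1 => castmx (dim4 k, dim4 k) (G *t (1%:M : 'M[R]_(qdim k)))
  end.

Fixpoint op2 (n : nat) : nat -> 'M[R]_4 -> 'M[R]_(qdim n) :=
  match n with
  | 0 => fun _ _ => 1%:M
  | n'.+1 => fun i G =>
      match i with
      | 0 => 1%:M
      | 1 => top2 n' G
      | i'.+1 => ((1%:M : 'M[R]_2) *t op2 n' i' G : 'M[R]_(qdim n'.+1))
      end
  end.

Inductive gate :=
  | Gate1 of 'M[R]_2 & nat
  | Gate2 of 'M[R]_4 & nat.  (* two-qubit gate on qubits i, i+1 *)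

Definition gate_op (n : nat) (g : gate) : 'M[R]_(qdim n) :=
  match g with
  | Gate1 G i => op1 n i G
  | Gate2 G i => op2 n i G
  end.

(* Operator of the circuit g_1, ..., g_k (g_1 applied first): g_k ... g_1. *)
Definition circuit_op (n : nat) (c : seq gate) : 'M[R]_(qdim n) :=
  foldl (fun acc g => gate_op n g *m acc) 1%:M c.

Definition conjb (m : nat) (C P : 'M[R]_m) : 'M[R]_m := C *m P *m invmx C.

(* n-fold tensor product f 0 ⊗ f 1 ⊗ ... ⊗ f (n-1) (f i acts on qubit i+1). *)
Fixpoint tensn (n : nat) : (nat -> 'M[R]_2) -> 'M[R]_(qdim n) :=
  match n with
  | 0 => fun _ => 1%:M
  | n'.+1 => fun f => (f 0%N *t tensn n' (fun i => f i.+1) : 'M[R]_(qdim n'.+1))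
  end.

End Qubits.

Inductive pauli := PI | PX | PZ | PXZ.

Definition pauli_mx (R : realType) (p : pauli) : 'M[R]_2 :=
  match p with
  | PI => 1%:M
  | PX => Xm R
  | PZ => Zm R
  | PXZ => Xm R *m Zm R
  end.

Definition pauli_op (R : realType) (n : nat) (s : bool) (P : n.-tuple pauli)
  : 'M[R]_(qdim n) :=
  (-1) ^+ s *: tensn n (fun i => pauli_mx R (nth PI P i)).

(* Derived generators; in a two-qubit symbol, 1 = upper qubit i, 2 = lower i+1. *)
Inductive Dsym := D1 | D2 | D3 | D4.
Inductive Esym := E1 | E2.

Definition D_gates (R : realType) (d : Dsym) (i : nat) : seq (gate R) :=
  let CZ := Gate2 (CZm R) i in
  let H1 := Gate1 (Hm R) i in
  let H2 := Gate1 (Hm R) i.+1 in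
  match d with
  | D1 => [:: CZ; H1; H2; CZ; H1; H2; CZ; H2]
  | D2 => [:: H1; CZ; H1; H2; CZ; H2]
  | D3 => [:: H1; H2; CZ; H1; H2; CZ; H2]
  | D4 => [:: H1; CZ; H1; H2; CZ; H2; CZ]
  end.

Definition E_gates (R : realType) (e : Esym) (i : nat) : seq (gate R) :=
  match e with
  | E1 => [::]
  | E2 => [:: Gate1 (Zm R) i]
  end.

(* An X-circuit on n qubits: symbols D_{d_1} (qubits 1,2), ...,
   D_{d_{n-1}} (qubits n-1,n), then E_e (qubit n). Equality of X-circuits is
   equality of the symbol data (d, e). *)
Definition xcircuit (n : nat) : Type := ((n.-1).-tuple Dsym * Esym)%type.

Definition xcircuit_gates (R : realType) (n : nat) (M : xcircuit n) : seq (gate R) :=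
  flatten [seq D_gates R p.1 p.2 | p <- zip (tval M.1) (iota 1 n.-1)]
  ++ E_gates R M.2 n.

Definition xcircuit_op (R : realType) (n : nat) (M : xcircuit n) : 'M[R]_(qdim n) :=
  circuit_op n (xcircuit_gates R M).

(* Main.v *)
Require Import Defs.
From HB Require Import structures.
From mathcomp Require Import all_boot all_order all_algebra.
From mathcomp Require Import reals ring lra.

Set Implicit Arguments. Unset Strict Implicit. Unset Printing Implicit Defensive.
Import GRing.Theory Num.Theory.
Local Open Scope ring_scope.

Definition hconj (p : pauli) : bool * pauli :=
  match p with PI => (false, PI) | PX => (false, PZ) | PZ => (false, PX) | PXZ => (true, PXZ) end.
Definition zconj (p : pauli) : bool * pauli :=
  match p with PI => (false, PI) | PX => (true, PX) | PZ => (false, PZ) | PXZ => (true, PXZ) end.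
Definition px p := match p with PX | PXZ => true | _ => false end.
Definition pz p := match p with PZ | PXZ => true | _ => false end.
Definition isI p := match p with PI => true | _ => false end.
Definition mkp (x z : bool) :=
  match x, z with false, false => PI | true, false => PX | false, true => PZ | true, true => PXZ end.
Definition czconj a b : bool * pauli * pauli :=
  (px a && px b, mkp (px a) (pz a (+) px b), mkp (px b) (px a (+) pz b)).

Inductive g4 := G4H1 | G4H2 | G4CZ.
Definition step4 (g : g4) (x : bool * pauli * pauli) : bool * pauli * pauli :=
  let: (s, a, b) := x in
  match g with
  | G4H1 => (s (+) (hconj a).1, (hconj a).2, b)
  | G4H2 => (s (+) (hconj b).1, a, (hconj b).2)
  | G4CZ => (s (+) (czconj a b).1.1, (czconj a b).1.2, (czconj a b).2)
  end.
Definition Dl d := match d with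
  | D1 => [:: G4CZ; G4H1; G4H2; G4CZ; G4H1; G4H2; G4CZ; G4H2]
  | D2 => [:: G4H1; G4CZ; G4H1; G4H2; G4CZ; G4H2]
  | D3 => [:: G4H1; G4H2; G4CZ; G4H1; G4H2; G4CZ; G4H2]
  | D4 => [:: G4H1; G4CZ; G4H1; G4H2; G4CZ; G4H2; G4CZ] end.
Definition step4l l x := foldl (fun y g => step4 g y) x l.
Definition chooseD b := match b with PI => D1 | PX => D2 | PZ => D3 | PXZ => D4 end.
Lemma table1 s a b d : px a -> isI (step4l (Dl d) (s, a, b)).1.2 -> d = chooseD b.
Proof. by case: s; case: a; case: b; case: d. Qed.
Lemma table2 s a b : px a ->
  isI (step4l (Dl (chooseD b)) (s, a, b)).1.2 && px (step4l (Dl (chooseD b)) (s, a, b)).2.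
Proof. by case: s; case: a; case: b. Qed.

Ltac mxc2 := let i := fresh "i" in let j := fresh "j" in
  apply/matrixP => i j; do 3 (rewrite ?mxE ?big_ord_recr ?big_ord0 /=);
  case: i => [[|[|//]] ?]; case: j => [[|[|//]] ?]; rewrite /= ?mxE /= ?expr0 ?expr1; ring.
Ltac mxc4 := let i := fresh "i" in let j := fresh "j" in
  apply/matrixP => i j; do 3 (rewrite ?mxE ?big_ord_recr ?big_ord0 /=);
  case: i => [[|[|[|[|//]]]] ?]; case: j => [[|[|[|[|//]]]] ?]; rewrite /= ?mxE /= ?expr0 ?expr1; ring.

Section Work.
Variable R : realType.
Local Notation pm := (pauli_mx R).

Lemma tensmxZl m n p q (k : R) (A : 'M[R]_(m,n)) (B : 'M[R]_(p,q)) :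
  (k *: A) *t B = k *: (A *t B).
Proof. by apply/matrixP => i j; rewrite !mxE mulrA. Qed.

Lemma tensmxZr m n p q (k : R) (A : 'M[R]_(m,n)) (B : 'M[R]_(p,q)) :
  A *t (k *: B) = k *: (A *t B).
Proof. by apply/matrixP => i j; rewrite !mxE mulrCA. Qed.

Lemma tens11 m n : (1%:M : 'M[R]_m) *t (1%:M : 'M[R]_n) = 1%:M.
Proof.
apply/matrixP => i j.
case: (mxtens_indexP i) => i1 i2; case: (mxtens_indexP j) => j1 j2.
rewrite tensmxE !mxE (inj_eq (can_inj (@mxtens_indexK m n))) xpair_eqE.
by case: (i1 == j1); case: (i2 == j2); rewrite /= ?mulr1 ?mulr0 ?mul0r.
Qed.

Lemma tensmxA m n p q r s (A : 'M[R]_(m,n)) (B : 'M[R]_(p,q)) (C : 'M[R]_(r,s))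
  (e1 : (m * p * r = m * (p * r))%N) (e2 : (n * q * s = n * (q * s))%N) :
  castmx (e1, e2) ((A *t B) *t C) = A *t (B *t C).
Proof.
apply/matrixP => i j; rewrite castmxE.
case: (mxtens_indexP i) => i1 i23; case: (mxtens_indexP i23) => i2 i3.
case: (mxtens_indexP j) => j1 j23; case: (mxtens_indexP j23) => j2 j3.
have -> : cast_ord (esym e1) (mxtens_index (i1, mxtens_index (i2, i3)))
    = mxtens_index (mxtens_index (i1, i2), i3).
  by apply: val_inj => /=; rewrite mulnDl -mulnA addnA.
have -> : cast_ord (esym e2) (mxtens_index (j1, mxtens_index (j2, j3)))
    = mxtens_index (mxtens_index (j1, j2), j3).
  by apply: val_inj => /=; rewrite mulnDl -mulnA addnA.
by rewrite !tensmxE mulrA.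
Qed.

Lemma castmx_mulmx a b (e : a = b) (M N : 'M[R]_a) :
  castmx (e, e) M *m castmx (e, e) N = castmx (e, e) (M *m N).
Proof. by case: b / e. Qed.

Lemma castmx_one a b (e : a = b) : castmx (e, e) (1%:M : 'M[R]_a) = 1%:M.
Proof. by case: b / e. Qed.

Lemma tens1_inj m (A B : 'M[R]_m) :
  (1%:M : 'M[R]_2) *t A = 1%:M *t B -> A = B.
Proof.
move=> h; apply/matrixP => i j.
have := congr1 (fun M : 'M[R]_(2 * m) => M (mxtens_index (ord0, i)) (mxtens_index (ord0, j))) h.
by rewrite /= !tensmxE !mxE /= !mul1r.
Qed.

Lemma tensr1_inj (A B : 'M[R]_2) :
  A *t (1%:M : 'M[R]_1) = B *t 1%:M -> A = B.
Proof.
move=> h; apply/matrixP => i j.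
have := congr1 (fun M : 'M[R]_(2 * 1) => M (mxtens_index (i, ord0)) (mxtens_index (j, ord0))) h.
by rewrite /= !tensmxE !mxE /= !mulr1.
Qed.

Lemma tens_notI m (A : 'M[R]_2) (W T : 'M[R]_m) :
  A *t W = 1%:M *t T -> (A 0 0 = 0 \/ A 1 1 = - A 0 0) -> T = 0.
Proof.
move=> h hA; apply/matrixP => i j.
have h0 := congr1 (fun M : 'M[R]_(2 * m) => M (mxtens_index (0, i)) (mxtens_index (0, j))) h.
have h1 := congr1 (fun M : 'M[R]_(2 * m) => M (mxtens_index (1, i)) (mxtens_index (1, j))) h.
move: h0 h1; rewrite /= !tensmxE !mxE /= !mul1r => h0 h1.
case: hA => hA.
  by rewrite -h0 hA mul0r.
move: h0 h1; rewrite hA mulNr => h0 h1.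
have : T i j = - T i j by rewrite -{1}h0 -h1 opprK.
set x := T i j; move=> hx; lra.
Qed.

Lemma one_neq0 k : (1%:M : 'M[R]_(qdim k)) != 0.
Proof.
have hk : (0 < qdim k)%N by rewrite qdimE expn_gt0.
apply/eqP => /matrixP /(_ (Ordinal hk) (Ordinal hk)); rewrite !mxE eqxx /=.
by move/eqP; rewrite oner_eq0.
Qed.

Lemma mulmx_cancel k (U A B : 'M[R]_k) : U \in unitmx -> A *m U = B *m U -> A = B.
Proof. by move=> hU /(congr1 (mulmx^~ (invmx U))); rewrite !mulmxK. Qed.

Lemma conj_intw k (C Q T : 'M[R]_k) : C \in unitmx ->
  (conjb C Q = T <-> C *m Q = T *m C).
Proof.
move=> hC; rewrite /conjb; split.
  by move=> <-; rewrite mulmxKV.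
by move=> ->; rewrite mulmxK.
Qed.

Lemma tensn_ext k (f g : nat -> 'M[R]_2) : (forall i, f i = g i) -> tensn k f = tensn k g.
Proof.
elim: k f g => [|k IH] f g h //=.
by rewrite h (IH (fun i => f i.+1) (fun i => g i.+1)).
Qed.

Lemma tensn_mul k (f g : nat -> 'M[R]_2) :
  tensn k f *m tensn k g = tensn k (fun i => f i *m g i).
Proof.
elim: k f g => [|k IH] f g /=; first by rewrite mulmx1.
by rewrite tensmx_mul IH.
Qed.

Lemma tensn1 k : tensn k (fun _ => (1%:M : 'M[R]_2)) = 1%:M.
Proof. by elim: k => [|k IH] //=; rewrite IH tens11. Qed.

Lemma hconj_ok p : Hm R *m pm p = ((-1) ^+ (hconj p).1 *: pm (hconj p).2) *m Hm R.
Proof. case: p; mxc2. Qed.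
Lemma zconj_ok p : Zm R *m pm p = ((-1) ^+ (zconj p).1 *: pm (zconj p).2) *m Zm R.
Proof. case: p; mxc2. Qed.
Lemma czconj_ok a b : CZm R *m (pm a *t pm b) =
  (((-1) ^+ (czconj a b).1.1 *: pm (czconj a b).1.2) *t pm (czconj a b).2) *m CZm R.
Proof. case: a; case: b; mxc4. Qed.
Lemma pm_sq p : pm p *m pm p = (if p is PXZ then -1 else 1) *: 1%:M.
Proof. case: p; mxc2. Qed.
Lemma notI_entries (c : R) p : ~~ isI p ->
  ((c *: pm p) 0 0 = 0 \/ (c *: pm p) 1 1 = - (c *: pm p) 0 0).
Proof.
case: p => // _; do 3 (rewrite ?mxE ?big_ord_recr ?big_ord0 /=); [left|right|left]; ring.
Qed.

End Work.



Section Work2.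
Variable R : realType.
Local Notation pm := (pauli_mx R).

Definition mat4 g : 'M[R]_(2 * 2) := match g with
  | G4H1 => Hm R *t (1%:M : 'M_2)
  | G4H2 => (1%:M : 'M_2) *t Hm R
  | G4CZ => CZm R end.
Definition M4 (x : bool * pauli * pauli) : 'M[R]_(2 * 2) :=
  ((-1) ^+ x.1.1 *: pm x.1.2) *t pm x.2.

Lemma step4_ok g x : mat4 g *m M4 x = M4 (step4 g x) *m mat4 g.
Proof.
case: x => [[s a] b]; case: g; rewrite /M4 /=.
- by rewrite !tensmx_mul mul1mx mulmx1 -scalemxAr hconj_ok -scalemxAl scalerA -signr_addb scalemxAl.
- rewrite !tensmx_mul mul1mx mulmx1 hconj_ok -scalemxAl !tensmxZr !tensmxZl scalerA.
  by rewrite signr_addb mulrC.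
- rewrite !tensmxZl -scalemxAr czconj_ok !tensmxZl signr_addb -scalerA.
  by rewrite -scalemxAl.
Qed.

Definition mat4l (l : seq g4) : 'M[R]_(2 * 2) := foldl (fun acc g => mat4 g *m acc) 1%:M l.

Lemma mat4l_gen l (A : 'M[R]_(2 * 2)) x y : A *m M4 x = M4 y *m A ->
  foldl (fun acc g => mat4 g *m acc) A l *m M4 x =
  M4 (foldl (fun y g => step4 g y) y l) *m foldl (fun acc g => mat4 g *m acc) A l.
Proof.
elim: l A y => [|g l IH] A y hA //=.
apply: IH; by rewrite -mulmxA hA !mulmxA step4_ok.
Qed.

Lemma mat4l_ok l x : mat4l l *m M4 x = M4 (step4l l x) *m mat4l l.
Proof. by apply: mat4l_gen; rewrite mul1mx mulmx1. Qed.

Lemma HH : Hm R *m Hm R = 1%:M.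
Proof.
have hh : (Num.sqrt (2:R))^-1 * (Num.sqrt 2)^-1 = 2^-1.
  by rewrite -invfM -expr2 sqr_sqrtr // Num.Theory.ler0n.
apply/matrixP => i j; do 3 (rewrite ?mxE ?big_ord_recr ?big_ord0 /=).
case: i => [[|[|//]] ?]; case: j => [[|[|//]] ?]; rewrite /= ?mxE /=.
all: set h := (Num.sqrt 2)^-1 in hh *.
all: nra.
Qed.

Lemma ZZ : Zm R *m Zm R = 1%:M.
Proof. mxc2. Qed.
Lemma XX : Xm R *m Xm R = 1%:M.
Proof. mxc2. Qed.
Lemma CZCZ : CZm R *m CZm R = 1%:M.
Proof. mxc4. Qed.

Lemma mat4_sq g : mat4 g *m mat4 g = 1%:M.
Proof.
case: g => /=.
- by rewrite tensmx_mul HH mulmx1 tens11.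
- by rewrite tensmx_mul HH mulmx1 tens11.
- exact: CZCZ.
Qed.

Lemma mat4l_unit l : mat4l l \in unitmx.
Proof.
rewrite /mat4l; have : (1%:M : 'M[R]_(2 * 2)) \in unitmx by exact: unitmx1.
elim: l (1%:M : 'M[R]_(2 * 2)) => [|g l IH] A hA //=.
apply: IH; rewrite unitmx_mul hA andbT.
by case: (mulmx1_unit (mat4_sq g)).
Qed.

Definition L k (G : 'M[R]_(2 * 2)) : 'M[R]_(qdim k.+2) :=
  castmx (dim4 k, dim4 k) (G *t (1%:M : 'M[R]_(qdim k))).

Lemma L_tens k (A B : 'M[R]_2) (T : 'M[R]_(qdim k)) :
  castmx (dim4 k, dim4 k) ((A *t B) *t T) = A *t (B *t T).
Proof. exact: tensmxA. Qed.

Lemma L_mul k G1 G2 : L k G1 *m L k G2 = L k (G1 *m G2).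
Proof. by rewrite /L castmx_mulmx tensmx_mul mulmx1. Qed.

Lemma L1 k : L k 1%:M = 1%:M.
Proof. by rewrite /L tens11 castmx_one. Qed.

Lemma L_unit k G : G \in unitmx -> L k G \in unitmx.
Proof.
move=> hG; have h : L k G *m L k (invmx G) = 1%:M by rewrite L_mul mulmxV // L1.
by case: (mulmx1_unit h).
Qed.

Lemma L_intw k G (X Y : 'M[R]_(2 * 2)) (T : 'M[R]_(qdim k)) : G *m X = Y *m G ->
  L k G *m castmx (dim4 k, dim4 k) (X *t T) = castmx (dim4 k, dim4 k) (Y *t T) *m L k G.
Proof. by move=> h; rewrite /L !castmx_mulmx !tensmx_mul mulmx1 mul1mx h. Qed.

Definition g4gate i g : gate R := match g with
  | G4H1 => Gate1 (Hm R) i | G4H2 => Gate1 (Hm R) i.+1 | G4CZ => Gate2 (CZm R) i end.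

Lemma D_gatesE d i : D_gates R d i = map (g4gate i) (Dl d).
Proof. by case: d. Qed.

Lemma gate_L k g : gate_op k.+2 (g4gate 1 g) = L k (mat4 g).
Proof.
case: g => /=.
- by rewrite /L L_tens tens11.
- by rewrite /L L_tens.
- by [].
Qed.

Lemma foldl_op k (l : seq (gate R)) (A : 'M[R]_(qdim k)) :
  foldl (fun acc g => gate_op k g *m acc) A l = circuit_op k l *m A.
Proof.
rewrite /circuit_op; elim: l A => [|g l IH] A /=; first by rewrite mul1mx.
by rewrite IH [in RHS]IH mulmx1 mulmxA.
Qed.

Lemma circuit_cat k (l1 l2 : seq (gate R)) : circuit_op k (l1 ++ l2) = circuit_op k l2 *m circuit_op k l1.
Proof. by rewrite {1}/circuit_op foldl_cat foldl_op. Qed.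

Lemma circuit_cons k (g : gate R) l : circuit_op k (g :: l) = circuit_op k l *m gate_op k g.
Proof. by rewrite /circuit_op /= foldl_op mulmx1. Qed.

Lemma circuit_D_gen k l (A : 'M[R]_(2 * 2)) :
  foldl (fun acc g => gate_op k.+2 g *m acc) (L k A) (map (g4gate 1) l)
  = L k (foldl (fun acc g => mat4 g *m acc) A l).
Proof.
elim: l A => [|g l IH] A //=.
by rewrite gate_L L_mul IH.
Qed.

Lemma circuit_D k d : circuit_op k.+2 (D_gates R d 1) = L k (mat4l (Dl d)).
Proof. by rewrite D_gatesE /circuit_op -(L1 k) circuit_D_gen. Qed.

Definition shift (g : gate R) := match g with
  | Gate1 G i => Gate1 G i.+1 | Gate2 G i => Gate2 G i.+1 end.
Definition gpos (g : gate R) := match g with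
  | Gate1 _ i => (0 < i)%N | Gate2 _ i => (0 < i)%N end.

Lemma gate_shift k g : gpos g -> gate_op k.+2 (shift g) = 1%:M *t gate_op k.+1 g.
Proof. by case: g => G [|i]. Qed.

Lemma circuit_shift k (l : seq (gate R)) : all gpos l ->
  circuit_op k.+2 (map shift l) = 1%:M *t circuit_op k.+1 l.
Proof.
elim: l => [|g l IH] /=; first by rewrite /circuit_op /= tens11.
move=> /andP [hg hl].
by rewrite !circuit_cons IH // gate_shift // tensmx_mul mulmx1.
Qed.

Lemma flat_shift (ds : seq Dsym) k m :
  flatten [seq D_gates R p.1 p.2 | p <- zip ds (iota k.+1 m)] =
  map shift (flatten [seq D_gates R p.1 p.2 | p <- zip ds (iota k m)]).
Proof.
elim: ds k m => [|d ds IH] k [|m] //=.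
rewrite map_cat IH; congr (_ ++ _); by case: d.
Qed.

Lemma flat_pos (ds : seq Dsym) k m :
  all gpos (flatten [seq D_gates R p.1 p.2 | p <- zip ds (iota k.+1 m)]).
Proof.
elim: ds k m => [|d ds IH] k [|m] //=.
rewrite all_cat IH andbT; by case: d.
Qed.

Lemma xop_cons k (d : Dsym) (t : k.-tuple Dsym) (e : Esym) :
  xcircuit_op R ((cons_tuple d t, e) : xcircuit k.+2) =
  (1%:M *t xcircuit_op R ((t, e) : xcircuit k.+1)) *m circuit_op k.+2 (D_gates R d 1).
Proof.
rewrite /xcircuit_op /xcircuit_gates /= -catA circuit_cat.
congr (_ *m _).
have -> : E_gates R e k.+2 = map shift (E_gates R e k.+1) by case: e.
rewrite (flat_shift t 1 k) -map_cat circuit_shift //.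
by rewrite all_cat flat_pos; case: e.
Qed.

End Work2.



Lemma tuple_cons_eta n T (t : n.+1.-tuple T) : t = cons_tuple (thead t) (behead_tuple t).
Proof. by apply: val_inj; case: t => [[|x s] h]. Qed.

Section Work3.
Variable R : realType.
Local Notation pm := (pauli_mx R).

Lemma tens1_unit m (C : 'M[R]_m) : C \in unitmx -> (1%:M : 'M[R]_2) *t C \in unitmx.
Proof.
move=> hC; have h : ((1%:M : 'M[R]_2) *t C) *m (1%:M *t invmx C) = 1%:M.
  by rewrite tensmx_mul mulmx1 mulmxV // tens11.
by case: (mulmx1_unit h).
Qed.

Lemma xop1 (t : 0.-tuple Dsym) e :
  xcircuit_op R ((t, e) : xcircuit 1) = (if e is E2 then Zm R else 1%:M) *t (1%:M : 'M[R]_1).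
Proof.
rewrite (tuple0 t); case: e; rewrite /xcircuit_op /xcircuit_gates /circuit_op /= ?mulmx1 //.
exact: (esym (@tens11 R 2 1)).
Qed.

Lemma xop_unit k (M : xcircuit k.+1) : xcircuit_op R M \in unitmx.
Proof.
elim: k M => [|k IH] [t e].
- rewrite xop1; have h : ((if e is E2 then Zm R else 1%:M) *t (1%:M : 'M[R]_1)) *m
     ((if e is E2 then Zm R else 1%:M) *t (1%:M : 'M[R]_1)) = 1%:M.
    by case: e; rewrite /= tensmx_mul ?ZZ !mulmx1; exact: (@tens11 R 2 1).
  by case: (mulmx1_unit h).
- rewrite (tuple_cons_eta t) xop_cons unitmx_mul tens1_unit ?IH //= circuit_D.
  exact/L_unit/mat4l_unit.
Qed.

Definition target k : 'M[R]_(qdim k) := tensn k (fun i => if i == k.-1 then Xm R else 1%:M).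
Definition Pq k (s : bool) (f : nat -> pauli) : 'M[R]_(qdim k) := (-1) ^+ s *: tensn k (fun i => pm (f i)).
Definition intw k (C Q T : 'M[R]_k) := C *m Q = T *m C.

Lemma target_sq k : target k *m target k = 1%:M.
Proof.
rewrite /target tensn_mul -(@tensn1 R k); apply: tensn_ext => i.
by case: (i == k.-1); [exact: XX | exact: mulmx1].
Qed.

Lemma target_C_neq0 k (C : 'M[R]_(qdim k)) : C \in unitmx -> target k *m C <> 0.
Proof.
move=> hC h.
have h0 : target k = 0 by rewrite -(mulmxK hC (target k)) h mul0mx.
move: (target_sq k); rewrite h0 mul0mx => /esym/eqP.
by rewrite (negbTE (@one_neq0 R k)).
Qed.

Lemma Pq_sq k (s : bool) f : Pq k s f *m Pq k s f = tensn k (fun i => pm (f i) *m pm (f i)).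
Proof. by rewrite /Pq -scalemxAl -scalemxAr scalerA -signr_addb addbb scale1r tensn_mul. Qed.

Lemma main0 s (f : nat -> pauli) : px (f 0%N) -> Pq 1 s f *m Pq 1 s f = 1%:M ->
  exists! M : xcircuit 1, intw (xcircuit_op R M) (Pq 1 s f) (target 1).
Proof.
move=> hf hQ.
have hX : f 0%N = PX.
  move: hf hQ; rewrite Pq_sq /=; case: (f 0%N) => // _.
  rewrite pm_sq tensmxZl tens11 => /matrixP /(_ ord0 ord0); rewrite !mxE /=.
  move=> h; exfalso; lra.
have hP : Pq 1 s f = ((-1) ^+ s *: Xm R) *t (1%:M : 'M[R]_1).
  by rewrite /Pq /= hX tensmxZl.
clear hQ.
exists (([tuple] : 0.-tuple Dsym), if s then E2 else E1); split.
  rewrite /intw xop1 hP /target /= !tensmx_mul; congr (_ *t _); clear hP; case: s; mxc2.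
move=> [t e]; rewrite /intw xop1 hP /target /= !tensmx_mul !mulmx1 => /tensr1_inj h.
clear hP hf hX; rewrite (tuple0 t); case: s h; case: e => //= /matrixP /(_ 0 1);
  do 3 (rewrite ?mxE ?big_ord_recr ?big_ord0 /=); rewrite ?expr1 ?expr0; move=> h; exfalso; lra.
Qed.

Lemma mx_eqN0 m (A : 'M[R]_m) : A = - A -> A = 0.
Proof.
move=> h; apply/matrixP => i j; move/matrixP: h => /(_ i j); rewrite !mxE => h; lra.
Qed.

Lemma main k : forall (s : bool) (f : nat -> pauli), px (f 0%N) ->
  Pq k.+1 s f *m Pq k.+1 s f = 1%:M ->
  exists! M : xcircuit k.+1, intw (xcircuit_op R M) (Pq k.+1 s f) (target k.+1).
Proof.
elim: k => [|k IH] s f hf hQ; first exact: main0.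
set T := tensn k (fun i => pm (f i.+2)).
set x := (s, f 0%N, f 1%N).
have hPq : Pq k.+2 s f = castmx (dim4 k, dim4 k) (M4 R x *t T).
  by rewrite /M4 L_tens /Pq /= tensmxZl.
have hD : forall d, circuit_op k.+2 (D_gates R d 1) *m Pq k.+2 s f =
   (((-1) ^+ (step4l (Dl d) x).1.1 *: pm (step4l (Dl d) x).1.2) *t
      (pm (step4l (Dl d) x).2 *t T)) *m circuit_op k.+2 (D_gates R d 1).
  by move=> d; rewrite circuit_D hPq (L_intw _ (mat4l_ok _ _ _)) /M4 L_tens.
have hDu : forall d, circuit_op k.+2 (D_gates R d 1) \in unitmx.
  by move=> d; rewrite circuit_D; exact/L_unit/mat4l_unit.
have htarget : target k.+2 = 1%:M *t target k.+1 by [].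
have key : forall d (t : k.-tuple Dsym) e,
  intw (xcircuit_op R ((cons_tuple d t, e) : xcircuit k.+2)) (Pq k.+2 s f) (target k.+2) <->
  (1%:M *t xcircuit_op R ((t, e) : xcircuit k.+1)) *m
    (((-1) ^+ (step4l (Dl d) x).1.1 *: pm (step4l (Dl d) x).1.2) *t
      (pm (step4l (Dl d) x).2 *t T)) =
  (1%:M *t target k.+1) *m (1%:M *t xcircuit_op R ((t, e) : xcircuit k.+1)).
  move=> d t e; rewrite /intw xop_cons htarget -mulmxA hD !mulmxA; split; last by move=> ->.
  exact: mulmx_cancel (hDu d).
have bad : forall d (t : k.-tuple Dsym) e, ~~ isI (step4l (Dl d) x).1.2 ->
  ~ intw (xcircuit_op R ((cons_tuple d t, e) : xcircuit k.+2)) (Pq k.+2 s f) (target k.+2).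
  move=> d t e hI /key; rewrite !tensmx_mul !mul1mx => /tens_notI h.
  exact: (target_C_neq0 (xop_unit _) (h (notI_entries _ hI))).
have /andP [hI hX'] := table2 s (f 1%N) hf.
have hy12 : (step4l (Dl (chooseD (f 1%N))) x).1.2 = PI by move: hI; case: (_.1.2).
pose s' := (step4l (Dl (chooseD (f 1%N))) x).1.1.
pose f' := fun i => if i is 0 then (step4l (Dl (chooseD (f 1%N))) x).2 else f i.+1.
have hY : ((-1) ^+ (step4l (Dl (chooseD (f 1%N))) x).1.1 *:
            pm (step4l (Dl (chooseD (f 1%N))) x).1.2) *t
          (pm (step4l (Dl (chooseD (f 1%N))) x).2 *t T) = 1%:M *t Pq k.+1 s' f'.
  by rewrite hy12 /= tensmxZl -tensmxZr.
have good : forall (t : k.-tuple Dsym) e,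
  intw (xcircuit_op R ((cons_tuple (chooseD (f 1%N)) t, e) : xcircuit k.+2)) (Pq k.+2 s f) (target k.+2) <->
  intw (xcircuit_op R ((t, e) : xcircuit k.+1)) (Pq k.+1 s' f') (target k.+1).
  move=> t e; rewrite key hY !tensmx_mul !mul1mx /intw; split.
    exact: tens1_inj.
  by move=> ->.
have hQ' : Pq k.+1 s' f' *m Pq k.+1 s' f' = 1%:M.
  have hD' := hD (chooseD (f 1%N)); rewrite hY in hD'.
  have h1 : 1%:M *m circuit_op k.+2 (D_gates R (chooseD (f 1%N)) 1) =
     (1%:M *t (Pq k.+1 s' f' *m Pq k.+1 s' f')) *m circuit_op k.+2 (D_gates R (chooseD (f 1%N)) 1).
    have e2 : (1%:M : 'M[R]_2) *t (Pq k.+1 s' f' *m Pq k.+1 s' f') =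
      (1%:M *t Pq k.+1 s' f') *m (1%:M *t Pq k.+1 s' f') by rewrite tensmx_mul mulmx1.
    by rewrite e2 mul1mx -mulmxA -hD' mulmxA -hD' -mulmxA hQ mulmx1.
  have := mulmx_cancel (hDu _) h1.
  rewrite -(@tens11 R 2 (qdim k.+1)) => /tens1_inj.
  by move=> <-.
have [[t0 e0] [h0 huniq]] := IH s' f' hX' hQ'.
exists (cons_tuple (chooseD (f 1%N)) t0, e0); split.
  exact/good.
move=> [t e]; rewrite (tuple_cons_eta t) => h.
have hd : thead t = chooseD (f 1%N).
  apply: (table1 (s := s) hf); apply/negPn/negP => hn.
  exact: (bad _ _ _ hn h).
rewrite hd in h *; move/good: h => h.
by have [-> ->] := huniq (behead_tuple t, e) h.
Qed.

End Work3.

Theorem proposition4p12 (R : realType) (n : nat) (s : bool)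
    (P : n.-tuple pauli) :
  (1 <= n)%N ->
  let Q := pauli_op R s P in
  Q *m Q = 1%:M ->
  Q <> 1%:M -> Q <> - 1%:M ->
  Q *m tensn n (fun i => if i == 0%N then Zm R else 1%:M)
    = - (tensn n (fun i => if i == 0%N then Zm R else 1%:M) *m Q) ->
  exists! M : xcircuit n,
    conjb (xcircuit_op R M) Q
      = tensn n (fun i => if i == n.-1 then Xm R else 1%:M).
Proof.
case: n P => [//|m] P _ Q hQ _ _ hZ.
set Z1 := tensn m.+1 (fun i => if i == 0%N then Zm R else 1%:M) in hZ.
have hf : px (nth PI P 0).
  apply/negPn/negP => hn.
  have hc : Q *m Z1 = Z1 *m Q.
    rewrite /Q /pauli_op -scalemxAl -scalemxAr !tensn_mul; congr (_ *: _).
    apply: tensn_ext => -[|i] /=.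
      by move: hn; case: (nth PI P 0) => //= _; rewrite mulmx1 mul1mx.
    by rewrite mulmx1 mul1mx.
  have h0 : Q *m Z1 = 0 by apply: mx_eqN0; rewrite {1}hZ hc.
  have hZZ : Z1 *m Z1 = 1%:M.
    rewrite /Z1 tensn_mul -(@tensn1 R m.+1); apply: tensn_ext => i.
    by case: (i == 0%N); [exact: ZZ | exact: mulmx1].
  have hQ0 : Q = 0 by rewrite -[Q]mulmx1 -hZZ mulmxA h0 mul0mx.
  move: hQ; rewrite hQ0 mul0mx => /esym/eqP.
  by rewrite (negbTE (@one_neq0 R m.+1)).
have [M [hM hu]] := main hf hQ.
exists M; split.
  by apply/conj_intw => //; exact: xop_unit.
move=> M' h; apply: hu; move: h; rewrite conj_intw //; exact: xop_unit.
Qed.
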